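(* Let $\mathcal{F}\subseteq\mathcal{P}(\omega)$ be a free filter. Assume that $h\colon Q\to Q$ is a homeomorphism of $Q=[-1,1]^\omega$ such that for every $x\in Q$, $x-h(x)\in C_\mathcal{F}$. Then $h[K_\mathcal{F}]=K_\mathcal{F}$.
   Context: A filter on $\omega$ is free if it contains all cofinite sets. $Q=[-1,1]^\omega$ is the Hilbert cube with the product topology and $Q^\circ=(-1,1)^\omega$ its pseudointerior. $K_\mathcal{F}=\{f\in Q:\forall m\in\omega\ \{n\in\omega:|f(n)|<2^{-m}\}\in\mathcal{F}\}$ and $C_\mathcal{F}=K_\mathcal{F}\cap Q^\circ$. The difference $x-h(x)$ is taken coordinatewise. *)

(* Defs.v *)
From HB Require Import structures.
From mathcomp Require Import all_boot all_order all_algebra.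
From mathcomp Require Import all_classical all_reals all_analysis.
Unset Printing Implicit Defensive.
Import Order.TTheory GRing.Theory Num.Theory.
Import numFieldNormedType.Exports.
Local Open Scope classical_set_scope.
Local Open Scope ring_scope.

Notation Romega R := {ptws nat -> R}.

Definition hilbQ (R : realType) : set (Romega R) :=
  [set f | forall n, -1 <= f n <= 1].

Definition pseudoint (R : realType) : set (Romega R) :=
  [set f | forall n, -1 < f n < 1].

Definition free_filter (F : set_system nat) : Prop :=
  @frechet_filter nat `<=` F.

Definition K_F (R : realType) (F : set_system nat) : set (Romega R) :=
  [set f | hilbQ R f /\
     forall m : nat, F [set n | `|f n| < (2%:R ^- m : R)]].

Definition C_F (R : realType) (F : set_system nat) : set (Romega R) :=
  K_F R F `&` pseudoint R.

Definition homeomorphism_of (R : realType) (A : set (Romega R))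
    (h : Romega R -> Romega R) : Prop :=
  exists g : Romega R -> Romega R,
    [/\ h @` A `<=` A, g @` A `<=` A,
        (forall x, A x -> g (h x) = x) & (forall y, A y -> h (g y) = y)] /\
    {within A, continuous h} /\ {within A, continuous g}.

(* Main.v *)
Require Import Defs.
From HB Require Import structures.
From mathcomp Require Import all_boot all_order all_algebra.
From mathcomp Require Import all_classical all_reals all_analysis.
Import Order.TTheory GRing.Theory Num.Theory.
Import numFieldNormedType.Exports.
Local Open Scope classical_set_scope.
Local Open Scope ring_scope.

Lemma half_bound (R : realType) (m : nat) (a b : R) :
  `|a| < 2%:R ^- m.+1 -> `|b| < 2%:R ^- m.+1 -> `|a + b| < 2%:R ^- m.
Proof.
move=> ha hb.
have e : (2%:R ^- m.+1 : R) = 2%:R ^- m / 2.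
  by rewrite exprSr invfM mulrC.
rewrite e in ha hb.
apply: (le_lt_trans (ler_normD a b)).
have := ltrD ha hb. by rewrite -splitr.
Qed.

Lemma FIS {F : set_system nat} (FF : ProperFilter F) {A B C : set nat} :
  F A -> F B -> (forall n, A n -> B n -> C n) -> F C.
Proof.
move=> hA hB hC; apply: (filterS _ (filterI hA hB)) => n [].
exact: hC.
Qed.

Theorem mainTheorem10 (R : realType) (F : set_system nat)
    (FF : ProperFilter F) (Ffree : free_filter F)
    (h : Romega R -> Romega R)
    (hhom : homeomorphism_of R (hilbQ R) h)
    (hdiff : forall x : Romega R, hilbQ R x ->
        C_F R F (fun n => x n - h x n)) :
  h @` K_F R F = K_F R F.
Proof.
case: hhom => g [[hQ gQ gh hg] _].
apply/seteqP; split.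
- move=> _ [x [xQ xK] <-]; split.
    by apply: hQ; exists x.
  move=> m.
  have [[_ dK] _] := hdiff x xQ.
  apply: (FIS FF (xK m.+1) (dK m.+1)) => n h1 h2 /=.
  have -> : h x n = x n + - (x n - h x n) by rewrite opprB addrC subrK.
  by apply: half_bound => //; rewrite normrN.
- move=> y [yQ yK].
  have xQ : hilbQ R (g y) by apply: gQ; exists y.
  exists (g y); last exact: hg.
  split => // m.
  have [[_ dK] _] := hdiff (g y) xQ.
  rewrite hg // in dK.
  apply: (FIS FF (yK m.+1) (dK m.+1)) => n h1 h2 /=.
  have -> : g y n = y n + (g y n - y n) by rewrite addrC subrK.
  exact: half_bound.
Qed.
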